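(* Let $X$ and $Y$ be Banach spaces, $T:X\to Y$ a bounded linear operator, and $Z$ a closed subspace of $X$. If $T[Z]$ is closed and complemented in $Y$ and $Z\cap\ker(T)$ is complemented in $X$, then $Z$ is complemented in $X$. *)

(* Defs.v *)
From HB Require Import structures.
From mathcomp Require Import all_boot all_order all_algebra.
From mathcomp Require Import all_classical all_reals all_analysis.
Set Implicit Arguments. Unset Strict Implicit. Unset Printing Implicit Defensive.
Import Order.TTheory GRing.Theory Num.Theory.
Import numFieldNormedType.Exports.
Local Open Scope classical_set_scope.
Local Open Scope ring_scope.

Definition linsubspace (K : numFieldType) (V : lmodType K) (A : set V) : Prop :=
  A 0 /\ forall (a : K) (x y : V), A x -> A y -> A (a *: x + y).

Definition complemented (K : numFieldType) (X : normedModType K) (Z : set X) : Prop :=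
  linsubspace Z /\ closed Z /\
  exists W : set X, linsubspace W /\ closed W /\ Z `&` W = [set 0] /\
    forall x : X, exists z w, Z z /\ W w /\ x = z + w.

(* Main.v *)
Require Import Defs.
From HB Require Import structures.
From mathcomp Require Import all_boot all_order all_algebra.
From mathcomp Require Import all_classical all_reals all_analysis.
Import Order.TTheory GRing.Theory Num.Theory.
Import numFieldNormedType.Exports.
Local Open Scope classical_set_scope.
Local Open Scope ring_scope.

Theorem lemma2p2 (K : numFieldType) (X Y : completeNormedModType K)
  (T : {linear X -> Y}) (Tcont : continuous T)
  (Z : set X) (Zsub : linsubspace Z) (Zcl : closed Z)
  (hTZ : complemented (T @` Z))
  (hker : complemented (Z `&` T @^-1` [set 0])) :
  complemented Z.
Proof.
case: hTZ => _ [_ [WY [[WY0 WYl] [WYcl [TZWY TZdec]]]]].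
case: hker => _ [_ [V [[V0 Vl] [Vcl [ZkV Vdec]]]]].
case: Zsub => Z0 Zl.
split; first by split.
split => //.
exists (V `&` T @^-1` WY).
split.
  split; first by split => //=; rewrite linear0.
  move=> a x y [Vx WYx] [Vy WYy]; split; first exact: Vl.
  by rewrite /= linearP; apply: WYl.
split.
  apply: closedI => //; apply: preimage_closed => // x _; exact: Tcont.
split.
  apply/seteqP; split => x /=.
    move=> [Zx [Vx WYTx]].
    have : (T @` Z `&` WY) (T x) by split => //; exists x.
    rewrite TZWY => /= Tx0.
    have : ((Z `&` T @^-1` [set 0]) `&` V) x by split.
    by rewrite ZkV.
  by move=> ->; split => //; split => //=; rewrite linear0.
move=> x.
have [y [w [[z0 Zz0 <-] [WYw Txe]]]] := TZdec (T x).
have [k [v [[Zk Tk0] [Vv xe]]]] := Vdec (x - z0).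
exists (z0 + k), v; split.
  by rewrite -[z0]scale1r; apply: Zl.
split.
  split => //=.
  have -> : v = x - z0 - k by rewrite xe addrAC subrr add0r.
  rewrite !linearB /= Txe.
  move: Tk0; rewrite /= => ->.
  by rewrite subr0 addrAC subrr add0r.
by rewrite -addrA -xe addrC subrK.
Qed.
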